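(* Suppose that all conditions listed in the context hold (without requiring $M_{24}<0$), where $R_4$ is chosen as $R_4=\mathbf{0}$. If $L_1=\Gamma_{11}^{-1}X_1^{-1}R_2$, $L_2=P_1^{-1}R_1+ET_{14}^{-1}T_{13}L_1$, $K_1=R_3P_2^{-1}$, then the feedback controller $u=K_1\hat x$ with the observer renders the closed-loop system ISS w.r.t. $w$.
   Context: System: $\dot x=Ax+Bu+Ep(q)+E_ww$, $y=Cx+Du+F_ww$, $q=C_qx$, $p:\mathbb{R}^{n_q}\to\mathbb{R}^{n_p}$, $p(\mathbf{0})=\mathbf{0}$; a symmetric $M$ is a $\delta$-MM for $p$ if $\begin{pmatrix}\delta q\\ \delta p\end{pmatrix}^\top M\begin{pmatrix}\delta q\\ \delta p\end{pmatrix}\geq0$ for all $q_1,q_2$, $\delta q=q_2-q_1$, $\delta p=p(q_2)-p(q_1)$. Observer: $\dot{\hat x}=A\hat x+Bu+Ep(\hat q+L_1(\hat y-y))+L_2(\hat y-y)$, $\hat y=C\hat x+Du$, $\hat q=C_q\hat x$. Conditions: (i) there exist a set $\mathcal{N}_1$ of symmetric pairs $(X_1,Y_1)$ ($X_1\in\mathbb{R}^{n_q\times n_q}$, $Y_1\in\mathbb{R}^{n_p\times n_p}$) and an invertible $T_1=\begin{pmatrix}T_{11}&T_{12}\\ T_{13}&T_{14}\end{pmatrix}$, $T_{14}$ invertible, with $T_1^\top\begin{pmatrix}X_1&\mathbf{0}\\ \mathbf{0}&-Y_1\end{pmatrix}T_1$ a $\delta$-MM of $p$ for all $(X_1,Y_1)\in\mathcal{N}_1$;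 (ii) there exist a set $\mathcal{N}_2$ of symmetric invertible pairs $(X_2,Y_2)$ and an invertible $T_2=\begin{pmatrix}T_{21}&T_{22}\\ T_{23}&T_{24}\end{pmatrix}$, $T_{24}$ invertible, with $T_2^\top\begin{pmatrix}X_2^{-1}&\mathbf{0}\\ \mathbf{0}&-Y_2^{-1}\end{pmatrix}T_2$ a $\delta$-MM of $p$ for all $(X_2,Y_2)\in\mathcal{N}_2$; (iii) there exist $\alpha_1,\alpha_2,\mu_1,\mu_2>0$, matrices $R_1,R_2,R_3,R_4$, $P_1=P_1^\top>0$, $P_2=P_2^\top>0$, $X_1=X_1^\top>0$, $Y_1=Y_1^\top$, $X_2=X_2^\top>0$, $Y_2=Y_2^\top>0$, $(X_i,Y_i)\in\mathcal{N}_i$, such that $\begin{pmatrix}\Phi-\varphi^\top Y_1\varphi & \phi^\top\\ \phi & -X_1\end{pmatrix}\leq0$ and $\begin{pmatrix}\Psi-\varphi^\top Y_2\varphi & \psi^\top\\ \psi & -X_2\end{pmatrix}\leq0$, with $\Phi=\begin{pmatrix}\Phi_0&-P_1\tilde E_1&P_1E_w+R_1F_w\\ *&\mathbf{0}&\mathbf{0}\\ *&*&-\mu_1I\end{pmatrix}$, $\Phi_0=\tilde A_1^\top P_1+P_1\tilde A_1+C^\top R_1^\top+R_1C+\alpha_1P_1$, $\Psi=\begin{pmatrix}\Psi_0&\tilde E_2Y_2+BR_4&E_w\\ *&\mathbf{0}&\mathbf{0}\\ *&*&-\mu_2I\end{pmatrix}$, $\Psi_0=\tilde A_2P_2+P_2\tilde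 A_2^\top+BR_3+R_3^\top B^\top+\alpha_2P_2$, $\phi=(-(X_1\Gamma_{11}C_q+R_2C),X_1\Gamma_{12},-R_2F_w)$, $\varphi=(\mathbf{0}_{n_p\times n_x},I_{n_p},\mathbf{0}_{n_p\times n_w})$, $\psi=(\Gamma_{21}C_qP_2,\Gamma_{22}Y_2,\mathbf{0}_{n_q\times n_w})$, $\tilde A_i=A-ET_{i4}^{-1}T_{i3}C_q$, $\tilde E_i=ET_{i4}^{-1}$, $\Gamma_{i1}=T_{i1}-T_{i2}T_{i4}^{-1}T_{i3}$, $\Gamma_{i2}=T_{i2}T_{i4}^{-1}$. Here $M_{24}$ denotes the lower-right $n_p\times n_p$ block of the multiplier in (ii). ISS w.r.t. $w$ means there exist $\beta\in\mathcal{KL}$, $\gamma\in\mathcal{K}$ with $\|(x,x-\hat x)(t)\|\leq\beta(\|(x,x-\hat x)(0)\|,t)+\gamma(\|w\|_\infty)$. *)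

(* Defs.v *)
From HB Require Import structures.
From mathcomp Require Import all_boot all_order all_algebra.
From mathcomp Require Import all_classical all_reals all_analysis.
Set Implicit Arguments. Unset Strict Implicit. Unset Printing Implicit Defensive.
Import Order.TTheory GRing.Theory Num.Theory.
Import numFieldNormedType.Exports.
Local Open Scope classical_set_scope.
Local Open Scope ring_scope.

Section Defs.
Variable R : realType.

Definition qform n (M : 'M[R]_n) (v : 'cV[R]_n) : R := (v^T *m M *m v) 0 0.

Definition posdef n (M : 'M[R]_n) := M^T = M /\ forall v, v != 0 -> 0 < qform M v.
Definition negsemidef n (M : 'M[R]_n) := forall v, qform M v <= 0.

Definition delta_MM nq np (p : 'cV[R]_nq -> 'cV[R]_np) (M : 'M[R]_(nq + np)) :=
  M^T = M /\
  forall q1 q2 : 'cV[R]_nq, 0 <= qform M (col_mx (q2 - q1) (p q2 - p q1)).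

Definition Tb1 nq np (T : 'M[R]_(nq + np)) : 'M[R]_(nq, nq) := ulsubmx T.
Definition Tb2 nq np (T : 'M[R]_(nq + np)) : 'M[R]_(nq, np) := ursubmx T.
Definition Tb3 nq np (T : 'M[R]_(nq + np)) : 'M[R]_(np, nq) := dlsubmx T.
Definition Tb4 nq np (T : 'M[R]_(nq + np)) : 'M[R]_(np, np) := drsubmx T.

Definition Atil nx nq np (A : 'M[R]_nx) (E : 'M[R]_(nx, np)) (Cq : 'M[R]_(nq, nx))
  (T : 'M[R]_(nq + np)) : 'M[R]_nx := A - E *m invmx (Tb4 T) *m Tb3 T *m Cq.
Definition Etil nx nq np (E : 'M[R]_(nx, np)) (T : 'M[R]_(nq + np)) : 'M[R]_(nx, np) :=
  E *m invmx (Tb4 T).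
Definition Gam1 nq np (T : 'M[R]_(nq + np)) : 'M[R]_nq :=
  Tb1 T - Tb2 T *m invmx (Tb4 T) *m Tb3 T.
Definition Gam2 nq np (T : 'M[R]_(nq + np)) : 'M[R]_(nq, np) :=
  Tb2 T *m invmx (Tb4 T).

(* symmetric 3x3 block matrix ( a b c ; * d e ; * * f ) *)
Definition sym3 n1 n2 n3 (a : 'M[R]_n1) (b : 'M[R]_(n1, n2)) (c : 'M[R]_(n1, n3))
  (d : 'M[R]_n2) (e : 'M[R]_(n2, n3)) (f : 'M[R]_n3) : 'M[R]_(n1 + n2 + n3) :=
  block_mx (block_mx a b b^T d) (col_mx c e) (row_mx c^T e^T) f.

Definition varphi nx np nw : 'M[R]_(np, nx + np + nw) :=
  row_mx (row_mx 0 1%:M) 0.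

Definition LMI1 nx ny nw nq np (A : 'M[R]_nx) (C : 'M[R]_(ny, nx)) (E : 'M[R]_(nx, np))
  (Ew : 'M[R]_(nx, nw)) (Fw : 'M[R]_(ny, nw)) (Cq : 'M[R]_(nq, nx))
  (T1 : 'M[R]_(nq + np)) (alpha1 mu1 : R) (P1 : 'M[R]_nx) (R1 : 'M[R]_(nx, ny))
  (R2 : 'M[R]_(nq, ny)) (X1 : 'M[R]_nq) (Y1 : 'M[R]_np) : 'M[R]_(nx + np + nw + nq) :=
  let At := Atil A E Cq T1 in
  let Phi0 := At^T *m P1 + P1 *m At + C^T *m R1^T + R1 *m C + alpha1 *: P1 in
  let Phi := sym3 Phi0 (- (P1 *m Etil E T1)) (P1 *m Ew + R1 *m Fw) 0 0 (- (mu1 *: 1%:M)) in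
  let phi : 'M[R]_(nq, nx + np + nw) :=
    row_mx (row_mx (- (X1 *m Gam1 T1 *m Cq + R2 *m C)) (X1 *m Gam2 T1)) (- (R2 *m Fw)) in
  let vp := varphi nx np nw in
  block_mx (Phi - vp^T *m Y1 *m vp) phi^T phi (- X1).

Definition LMI2 nx nu nw nq np (A : 'M[R]_nx) (B : 'M[R]_(nx, nu)) (E : 'M[R]_(nx, np))
  (Ew : 'M[R]_(nx, nw)) (Cq : 'M[R]_(nq, nx))
  (T2 : 'M[R]_(nq + np)) (alpha2 mu2 : R) (P2 : 'M[R]_nx) (R3 : 'M[R]_(nu, nx))
  (R4 : 'M[R]_(nu, np)) (X2 : 'M[R]_nq) (Y2 : 'M[R]_np) : 'M[R]_(nx + np + nw + nq) :=
  let At := Atil A E Cq T2 in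
  let Psi0 := At *m P2 + P2 *m At^T + B *m R3 + R3^T *m B^T + alpha2 *: P2 in
  let Psi := sym3 Psi0 (Etil E T2 *m Y2 + B *m R4) Ew 0 0 (- (mu2 *: 1%:M)) in
  let psi : 'M[R]_(nq, nx + np + nw) :=
    row_mx (row_mx (Gam1 T2 *m Cq *m P2) (Gam2 T2 *m Y2)) 0 in
  let vp := varphi nx np nw in
  block_mx (Psi - vp^T *m Y2 *m vp) psi^T psi (- X2).

Definition closed_loop_solution nx nu ny nw nq np
  (A : 'M[R]_nx) (B : 'M[R]_(nx, nu)) (E : 'M[R]_(nx, np)) (Ew : 'M[R]_(nx, nw))
  (C : 'M[R]_(ny, nx)) (D : 'M[R]_(ny, nu)) (Fw : 'M[R]_(ny, nw)) (Cq : 'M[R]_(nq, nx))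
  (p : 'cV[R]_nq -> 'cV[R]_np)
  (L1 : 'M[R]_(nq, ny)) (L2 : 'M[R]_(nx, ny)) (K1 : 'M[R]_(nu, nx))
  (w : R -> 'cV[R]_nw) (x xh : R -> 'cV[R]_nx) :=
  {within `[0, +oo[, continuous x} /\ {within `[0, +oo[, continuous xh} /\
  forall t : R, 0 < t ->
    let u := K1 *m xh t in
    let y := C *m x t + D *m u + Fw *m w t in
    let yh := C *m xh t + D *m u in
    let q := Cq *m x t in
    let qh := Cq *m xh t in
    is_derive t 1 x (A *m x t + B *m u + E *m p q + Ew *m w t) /\
    is_derive t 1 xh (A *m xh t + B *m u + E *m p (qh + L1 *m (yh - y)) + L2 *m (yh - y)).

Definition classK (g : R -> R) :=
  g 0 = 0 /\ {within `[0, +oo[, continuous g} /\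
  (forall a b, 0 <= a -> a < b -> g a < g b).

Definition classKL (b : R -> R -> R) :=
  (forall t, 0 <= t -> classK (fun s => b s t)) /\
  (forall s, 0 <= s ->
     (forall t1 t2, 0 <= t1 -> t1 <= t2 -> b s t2 <= b s t1) /\
     (b s t @[t --> +oo] --> 0)).

(* essential-sup norm of the input on [0, +oo) (here: sup norm) *)
Definition sup_norm n (w : R -> 'cV[R]_n) : R :=
  sup [set `|w t| | t in `[0, +oo[%classic].

Definition bounded_input n (w : R -> 'cV[R]_n) :=
  exists M : R, forall t, 0 <= t -> `|w t| <= M.

Definition closed_loop_ISS nx nu ny nw nq np
  (A : 'M[R]_nx) (B : 'M[R]_(nx, nu)) (E : 'M[R]_(nx, np)) (Ew : 'M[R]_(nx, nw))
  (C : 'M[R]_(ny, nx)) (D : 'M[R]_(ny, nu)) (Fw : 'M[R]_(ny, nw)) (Cq : 'M[R]_(nq, nx))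
  (p : 'cV[R]_nq -> 'cV[R]_np)
  (L1 : 'M[R]_(nq, ny)) (L2 : 'M[R]_(nx, ny)) (K1 : 'M[R]_(nu, nx)) :=
  exists (beta : R -> R -> R) (gamma : R -> R), classKL beta /\ classK gamma /\
  forall (w : R -> 'cV[R]_nw) (x xh : R -> 'cV[R]_nx),
    bounded_input w ->
    closed_loop_solution A B E Ew C D Fw Cq p L1 L2 K1 w x xh ->
    forall t, 0 <= t ->
      `|col_mx (x t) (x t - xh t)| <=
        beta `|col_mx (x 0) (x 0 - xh 0)| t + gamma (sup_norm w).

End Defs.

(* Main.v *)
Require Import Defs.
From HB Require Import structures.
From mathcomp Require Import all_boot all_order all_algebra.
From mathcomp Require Import all_classical all_reals all_analysis.
From mathcomp Require Import ring lra.
Import Order.TTheory GRing.Theory Num.Theory.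
Import numFieldNormedType.Exports.
Local Open Scope classical_set_scope.
Local Open Scope ring_scope.

Section Aux.
Set Implicit Arguments. Unset Strict Implicit. Unset Printing Implicit Defensive.
Variable R : realType.

Definition dot n (u v : 'cV[R]_n) : R := (u^T *m v) 0 0.

Lemma dotE n (u v : 'cV[R]_n) : dot u v = \sum_i u i 0 * v i 0.
Proof. by rewrite /dot !mxE; apply: eq_bigr => i _; rewrite mxE. Qed.

Lemma dotC n (u v : 'cV[R]_n) : dot u v = dot v u.
Proof. rewrite !dotE; apply: eq_bigr => i _; exact: mulrC. Qed.

Lemma dotDl n (u1 u2 v : 'cV[R]_n) : dot (u1 + u2) v = dot u1 v + dot u2 v.
Proof. by rewrite !dotE -big_split; apply: eq_bigr => i _; rewrite mxE mulrDl. Qed.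

Lemma dotDr n (u v1 v2 : 'cV[R]_n) : dot u (v1 + v2) = dot u v1 + dot u v2.
Proof. by rewrite dotC dotDl !(dotC u). Qed.

Lemma dotNl n (u v : 'cV[R]_n) : dot (- u) v = - dot u v.
Proof. by rewrite !dotE -sumrN; apply: eq_bigr => i _; rewrite mxE mulNr. Qed.

Lemma dotNr n (u v : 'cV[R]_n) : dot u (- v) = - dot u v.
Proof. by rewrite dotC dotNl dotC. Qed.

Lemma dotZl n k (u v : 'cV[R]_n) : dot (k *: u) v = k * dot u v.
Proof. by rewrite !dotE mulr_sumr; apply: eq_bigr => i _; rewrite mxE mulrA. Qed.

Lemma dotZr n k (u v : 'cV[R]_n) : dot u (k *: v) = k * dot u v.
Proof. by rewrite dotC dotZl dotC. Qed.

Lemma dotBl n (u1 u2 v : 'cV[R]_n) : dot (u1 - u2) v = dot u1 v - dot u2 v.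
Proof. by rewrite dotDl dotNl. Qed.

Lemma dotBr n (u v1 v2 : 'cV[R]_n) : dot u (v1 - v2) = dot u v1 - dot u v2.
Proof. by rewrite dotDr dotNr. Qed.

Lemma dot0l n (v : 'cV[R]_n) : dot 0 v = 0.
Proof. by rewrite dotE big1 // => i _; rewrite mxE mul0r. Qed.

Lemma dot0r n (v : 'cV[R]_n) : dot v 0 = 0.
Proof. by rewrite dotC dot0l. Qed.

Lemma dot_trmx n m (u : 'cV[R]_n) (M : 'M[R]_(n,m)) (v : 'cV[R]_m) :
  dot u (M *m v) = dot (M^T *m u) v.
Proof. by rewrite /dot trmx_mul trmxK mulmxA. Qed.

Lemma dot_trmx' n m (u : 'cV[R]_n) (M : 'M[R]_(m,n)) (v : 'cV[R]_m) :
  dot u (M^T *m v) = dot v (M *m u).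
Proof. by rewrite dot_trmx trmxK dotC. Qed.

Lemma dot_col n1 n2 (u1 v1 : 'cV[R]_n1) (u2 v2 : 'cV[R]_n2) :
  dot (col_mx u1 u2) (col_mx v1 v2) = dot u1 v1 + dot u2 v2.
Proof. by rewrite /dot tr_col_mx mul_row_col mxE. Qed.

Lemma qformE n (M : 'M[R]_n) v : qform M v = dot v (M *m v).
Proof. by rewrite /qform /dot mulmxA. Qed.

Lemma qform_sum n (M : 'M[R]_n) v :
  qform M v = \sum_i \sum_j M i j * (v i 0 * v j 0).
Proof.
rewrite qformE dotE; apply: eq_bigr => i _; rewrite mxE mulr_sumr.
by apply: eq_bigr => j _; rewrite mulrCA.
Qed.

Lemma is_derive_coord m n (x : R -> 'M[R]_(m,n)) (t : R) dx i j :
  is_derive t 1 x dx -> is_derive t 1 (fun s => x s i j) (dx i j).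
Proof.
move=> [dv dval].
have cv : (fun h : R => h^-1 *: ((x \o shift t) (h *: 1) - x t)) @ 0^' --> dx.
  by rewrite -dval; exact: dv.
have cc : (fun h : R => h^-1 *: (((fun s => x s i j) \o shift t) (h *: 1) - x t i j)) @ 0^' --> dx i j.
  have -> : (fun h : R => h^-1 *: (((fun s => x s i j) \o shift t) (h *: 1) - x t i j)) =
     (fun M : 'M[R]_(m,n) => M i j) \o (fun h : R => h^-1 *: ((x \o shift t) (h *: 1) - x t)).
    by apply: funext => h /=; rewrite !mxE.
  apply: cvg_comp cv _; exact: coord_continuous.
split; first by apply/cvg_ex; exists (dx i j).
exact: cvg_lim.
Qed.

Lemma is_derive_qform n (M : 'M[R]_n) (u : R -> 'cV[R]_n) (t : R) du :
  is_derive t 1 u du ->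
  is_derive t 1 (fun s => qform M (u s)) (dot du (M *m u t) + dot (u t) (M *m du)).
Proof.
move=> hu.
have -> : (fun s => qform M (u s)) =
   \sum_(i < n) \sum_(j < n) (fun s => M i j * (u s i 0 * u s j 0)).
  apply: funext => s; rewrite qform_sum fct_sumE; apply: eq_bigr => i _.
  by rewrite fct_sumE.
apply: is_derive_eq.
  apply: is_derive_sum => i; apply: is_derive_sum => j.
  apply: (@is_deriveZ _ _ _ (fun s => u s i 0 * u s j 0) (M i j)).
  exact: is_deriveM (is_derive_coord i 0 hu) (is_derive_coord j 0 hu).
rewrite !dotE -big_split /=; apply: eq_bigr => i _.
rewrite !mxE mulr_sumr mulr_sumr -big_split /=; apply: eq_bigr => j _.
rewrite /GRing.scale /=.
ring.
Qed.


Lemma mx_entry_le m n (A : 'M[R]_(m,n)) i j : `|A i j| <= `|A|.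
Proof.
have -> : `|A| = mx_norm A by [].
rewrite mx_normrE.
exact: (le_bigmax _ (fun ij : 'I_m * 'I_n => `|A ij.1 ij.2|) (i, j)).
Qed.

Lemma mx_norm_ge0' m n (A : 'M[R]_(m,n)) : 0 <= `|A|.
Proof. exact: normr_ge0. Qed.

Lemma mx_norm_trmx m n (A : 'M[R]_(m,n)) : `|A^T| = `|A|.
Proof.
apply: le_anti; apply/andP; split.
  have -> : `|A^T| = mx_norm A^T by [].
  rewrite mx_normrE; apply: bigmax_le => // ij _.
  by rewrite mxE; exact: mx_entry_le.
have -> : `|A| = mx_norm A by [].
rewrite mx_normrE; apply: bigmax_le => // ij _.
by have := mx_entry_le A^T ij.2 ij.1; rewrite mxE.
Qed.

Lemma qform_continuous_rV n (M : 'M[R]_n) :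
  continuous (fun r : 'rV[R]_n => qform M r^T).
Proof.
have -> : (fun r : 'rV[R]_n => qform M r^T) =
   \sum_(i < n) \sum_(j < n) ((cst (M i j)) * ((fun r : 'rV[R]_n => r 0 i) * (fun r => r 0 j))).
  apply: funext => r; rewrite qform_sum fct_sumE; apply: eq_bigr => i _.
  by rewrite fct_sumE; apply: eq_bigr => j _; rewrite !mxE.
move=> r; apply: differentiable_continuous.
apply: differentiable_sum => i; apply: differentiable_sum => j.
apply: differentiableM; first exact: differentiable_cst.
by apply: differentiableM; exact: differentiable_coord.
Qed.

Lemma qform_ub n (M : 'M[R]_n) :
  exists2 C : R, 0 <= C & forall v, qform M v <= C * `|v| ^+ 2.
Proof.
exists (\sum_i \sum_j `|M i j|).
  by apply: sumr_ge0 => i _; apply: sumr_ge0 => j _.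
move=> v; rewrite qform_sum mulr_suml; apply: ler_sum => i _.
rewrite mulr_suml; apply: ler_sum => j _.
apply: le_trans (ler_norm _) _; rewrite !normrM.
apply: ler_wpM2l => //; rewrite expr2.
by apply: ler_pM => //; exact: mx_entry_le.
Qed.

Lemma qform_scale n (M : 'M[R]_n) k v : qform M (k *: v) = k ^+ 2 * qform M v.
Proof. by rewrite !qformE -scalemxAr dotZl dotZr mulrA expr2. Qed.

Lemma qform0 n (M : 'M[R]_n) : qform M 0 = 0.
Proof. by rewrite qformE dot0l. Qed.

Lemma posdef_lb n (M : 'M[R]_n) : posdef M ->
  exists2 m : R, 0 < m & forall v, m * `|v| ^+ 2 <= qform M v.
Proof.
move=> [Msym Mpos].
pose S := [set r : 'rV[R]_n | `|r| = 1].
have [[c0 Sc0]|S0] := pselect (S !=set0); last first.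
  exists 1 => // v; have [->|vn0] := eqVneq v 0; first by rewrite normr0 qform0 expr0n /= mulr0.
  exfalso; apply: S0; exists (`|v^T|^-1 *: v^T); rewrite /S /= normrZ normfV normr_id.
  by rewrite mulVf // normr_eq0 -(inj_eq (@trmx_inj _ _ _)) trmxK trmx0.
have cS : compact S.
  apply: bounded_closed_compact.
    exists 1; split => // x x1 r; rewrite /S /= => ->; exact: ltW.
  have -> : S = (fun r : 'rV[R]_n => `|r|) @^-1` [set x | x = 1] by [].
  apply: preimage_closed; last exact: closed_eq.
  by move=> x _; exact: norm_continuous.
have [c Sc cmin] := EVT_min_rV (ex_intro _ c0 Sc0) cS
  (continuous_subspaceT (@qform_continuous_rV _ M)).
rewrite inE /S /= in Sc.
have cn0 : c^T != 0.
  by rewrite -(inj_eq (@trmx_inj _ _ _)) trmxK trmx0 -normr_eq0 Sc oner_eq0.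
exists (qform M c^T); first exact: Mpos.
move=> v; have [->|vn0] := eqVneq v 0; first by rewrite normr0 qform0 expr0n /= mulr0.
have vp : 0 < `|v| by rewrite normr_gt0.
have := cmin (`|v|^-1 *: v^T).
rewrite inE /S /= normrZ normfV normr_id mx_norm_trmx mulVf ?gt_eqF //.
move=> /(_ erefl); rewrite linearZ /= trmxK qform_scale.
by rewrite -ler_pdivlMr ?exprn_gt0 // mulrC exprVn.
Qed.

Lemma qform_rel n (G P : 'M[R]_n) : posdef P ->
  exists2 k : R, 0 <= k & forall v, qform G v <= k * qform P v.
Proof.
move=> /posdef_lb [m m0 hm]; have [C C0 hC] := qform_ub G.
exists (C / m); first by rewrite divr_ge0 // ltW.
move=> v; apply: le_trans (hC v) _.
have -> : C * `|v| ^+ 2 = (C / m) * (m * `|v| ^+ 2).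
  by rewrite mulrA divfK // gt_eqF.
by apply: ler_wpM2l => //; rewrite divr_ge0 // ltW.
Qed.

End Aux.


Section Aux2.
Set Implicit Arguments. Unset Strict Implicit. Unset Printing Implicit Defensive.
Variable R : realType.

Lemma is_derive_lin (c x : R) : is_derive x 1 (fun s : R => c * s) c.
Proof.
have h := is_deriveM (is_derive_cst c x 1) (is_derive_id x 1).
have e : (cst c * id) = (fun s : R => c * s) by [].
rewrite -e; apply: is_derive_eq h _.
by rewrite /cst /= scaler0 addr0 /GRing.scale /= mulr1.
Qed.

Lemma is_derive_expRM (c x : R) : is_derive x 1 (fun s => expR (c * s)) (c * expR (c * x)).
Proof.
have hl := is_derive_lin c x.
have d1 : derivable (fun s : R => c * s) x 1 by case: hl.
have d2 : derivable (@expR R) (c * x) 1 by exact: derivable_expR.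
have dc : derivable (expR \o (fun s : R => c * s)) x 1.
  apply/derivable1_diffP; apply: differentiable_comp; exact/derivable1_diffP.
split; first exact: dc.
rewrite -derive1E derive1_comp // !derive1E.
have [_ ->] := hl; have [_ ->] := is_derive_expR (c * x).
by rewrite mulrC.
Qed.


Lemma expRM_continuous (c : R) : continuous (fun s : R => expR (c * s)).
Proof.
move=> x; apply: differentiable_continuous; apply/derivable1_diffP.
by case: (is_derive_expRM c x).
Qed.

Lemma comparison (U : R -> R) (c b : R) : 0 < c -> 0 <= b ->
  {within `[0, +oo[, continuous U} ->
  (forall t : R, 0 < t -> exists2 dU : R, is_derive t 1 U dU & dU <= - c * U t + b) ->
  forall t : R, 0 <= t -> U t <= expR (- (c * t)) * U 0 + b / c.
Proof.
move=> c0 b0 cU dU t t0.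
pose g := (fun s : R => expR (c * s)) * (U - cst (b / c)).
have gd : forall s : R, 0 < s -> exists2 dg : R, is_derive s 1 g dg & dg <= 0.
  move=> s s0; have [du hdu le] := dU s s0.
  have hU' := is_deriveB hdu (is_derive_cst (b / c) s 1).
  have h := is_deriveM (is_derive_expRM c s) hU'.
  eexists; first exact: h.
  rewrite /GRing.scale /= subr0 /cst.
  have -> : expR (c * s) * du + (U s - b / c) * (c * expR (c * s)) =
     expR (c * s) * (du + c * U s - b) by field; rewrite gt_eqF.
  rewrite pmulr_rle0 ?expR_gt0 //; lra.
have cg : {within `[0, +oo[, continuous g}.
  move=> s; apply: cvgM.
    exact: (continuous_subspaceT (@expRM_continuous c)).
  apply: cvgB; first exact: cU.
  exact: cvg_cst.
have gle : g t <= g 0.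
  move: t0; rewrite le_eqVlt => /predU1P [<-|tp] //.
  apply: (@ler0_derive1_le_cc _ g 0 t).
  - move=> x; rewrite in_itv /= => /andP [x0 _].
    by have [dg [hd _] _] := gd x x0.
  - move=> x; rewrite in_itv /= => /andP [x0 _].
    have [dg hd le] := gd x x0.
    by rewrite derive1E derive_val.
  - apply: continuous_subspaceW cg => x /=; rewrite !in_itv /= => /andP [-> _] //.
  - by rewrite in_itv /= lexx ltW.
  - by rewrite in_itv /= lexx ltW.
  - exact: ltW.
have gt_ : g t = expR (c * t) * (U t - b / c) by [].
have g0 : g 0 = U 0 - b / c.
  have -> : g 0 = expR (c * 0) * (U 0 - b / c) by [].
  by rewrite mulr0 expR0 mul1r.
move: gle; rewrite gt_ g0.
have e : expR (- (c * t)) * expR (c * t) = 1 by rewrite -expRD addNr expR0.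
have ep : 0 < expR (- (c * t)) by exact: expR_gt0.
have ep' : 0 < expR (c * t) by exact: expR_gt0.
move=> h.
have h2 : U t - b / c <= expR (- (c * t)) * (U 0 - b / c).
  have := ler_wpM2l (ltW ep) h; rewrite mulrA e mul1r //.
have : 0 <= expR (- (c * t)) * (b / c) by rewrite mulr_ge0 // ?divr_ge0 // ltW.
move: h2; rewrite mulrBr; lra.
Qed.

End Aux2.


Section Aux3.
Set Implicit Arguments. Unset Strict Implicit. Unset Printing Implicit Defensive.
Variable R : realType.

Lemma dot_block m1 m2 (u1 v1 : 'cV[R]_m1) (u2 v2 : 'cV[R]_m2) a b c d :
  dot (col_mx u1 u2) (block_mx a b c d *m col_mx v1 v2) =
  dot u1 (a *m v1) + dot u1 (b *m v2) + dot u2 (c *m v1) + dot u2 (d *m v2).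
Proof. by rewrite mul_block_col dot_col !dotDr !addrA. Qed.

Lemma dot_sym_mv n (P : 'M[R]_n) u v : P^T = P -> dot (P *m u) v = dot u (P *m v).
Proof. by move=> hP; rewrite dot_trmx hP. Qed.

Lemma schur_unit p q (T : 'M[R]_(p + q)) : T \in unitmx -> drsubmx T \in unitmx ->
  ulsubmx T - ursubmx T *m invmx (drsubmx T) *m dlsubmx T \in unitmx.
Proof.
rewrite -(submxK T) block_mxKul block_mxKur block_mxKdl block_mxKdr.
move: (ulsubmx T) (ursubmx T) (dlsubmx T) (drsubmx T) => a b c d hT h4.
have e : block_mx 1%:M (- (b *m invmx d)) 0 1%:M *m block_mx a b c d =
         block_mx (a - b *m invmx d *m c) 0 c d.
  rewrite mulmx_block !mul1mx !mul0mx !add0r !mulNmx.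
  by rewrite -!mulmxA mulVmx // mulmx1 subrr.
have := congr1 determinant e.
rewrite det_mulmx det_ublock det_lblock !det1 !mul1r => hd.
move: hT h4; rewrite !unitmxE !unitfE hd mulf_eq0 negb_or => /andP [] //.
Qed.


Lemma obs_ineq nx ny nw nq np (A : 'M[R]_nx) (C : 'M[R]_(ny,nx)) (E : 'M[R]_(nx,np))
  (Ew : 'M[R]_(nx,nw)) (Fw : 'M[R]_(ny,nw)) (Cq : 'M[R]_(nq,nx)) (T1 : 'M[R]_(nq+np))
  (alpha1 mu1 : R) (P1 : 'M[R]_nx) (R1 : 'M[R]_(nx,ny)) (R2 : 'M[R]_(nq,ny))
  (X1 : 'M[R]_nq) (Y1 : 'M[R]_np) (L1 : 'M[R]_(nq,ny)) (L2 : 'M[R]_(nx,ny))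
  (e ed : 'cV[R]_nx) (w : 'cV[R]_nw) (dq : 'cV[R]_nq) (dp : 'cV[R]_np) :
  P1^T = P1 -> P1 \in unitmx -> X1 \in unitmx -> Tb4 T1 \in unitmx -> Gam1 T1 \in unitmx ->
  L1 = invmx (Gam1 T1) *m invmx X1 *m R2 ->
  L2 = invmx P1 *m R1 + E *m invmx (Tb4 T1) *m Tb3 T1 *m L1 ->
  dq = Cq *m e + L1 *m (C *m e + Fw *m w) ->
  ed = A *m e + E *m dp + Ew *m w + L2 *m (C *m e + Fw *m w) ->
  0 <= qform (T1^T *m block_mx X1 0 0 (- Y1) *m T1) (col_mx dq dp) ->
  negsemidef (LMI1 A C E Ew Fw Cq T1 alpha1 mu1 P1 R1 R2 X1 Y1) ->
  dot ed (P1 *m e) + dot e (P1 *m ed) <= - alpha1 * qform P1 e + mu1 * dot w w.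
Proof.
move=> sP uP uX u4 uG hL1 hL2 hdq hed hMM hLMI.
pose z := Tb1 T1 *m dq + Tb2 T1 *m dp.
pose v := Tb3 T1 *m dq + Tb4 T1 *m dp.
have hT : T1 *m col_mx dq dp = col_mx z v.
  by rewrite -{1}(submxK T1) mul_block_col.
have hMM' : 0 <= dot z (X1 *m z) - dot v (Y1 *m v).
  move: hMM; rewrite qformE -!mulmxA dot_trmx' dotC hT dot_block.
  by rewrite !mul0mx !dot0r mulNmx dotNr !addr0.
have hdp : dp = invmx (Tb4 T1) *m (v - Tb3 T1 *m dq).
  by rewrite /v addrAC subrr add0r mulKmx.
have hz0 : z = Gam1 T1 *m dq + Gam2 T1 *m v.
  rewrite /z {1}hdp /Gam1 /Gam2 !mulmxBr !mulmxBl !mulmxA.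
  apply/matrixP => i j; rewrite !mxE. ring.
have hz : X1 *m z = X1 *m (Gam1 T1 *m (Cq *m e)) + R2 *m (C *m e) + R2 *m (Fw *m w)
   + X1 *m (Gam2 T1 *m v).
  rewrite hz0 hdq hL1 !mulmxDr -!mulmxA !(mulKVmx uG) !(mulKVmx uX).
  apply/matrixP => i j; rewrite !mxE. ring.
have hPed : P1 *m ed = P1 *m (Atil A E Cq T1 *m e) + P1 *m (Etil E T1 *m v)
   + P1 *m (Ew *m w) + R1 *m (C *m e) + R1 *m (Fw *m w).
  rewrite hed hL2 {1}hdp hdq /Atil /Etil.
  rewrite !(mulmxDr, mulmxBr, mulmxDl, mulmxBl, mulNmx, mulmxN) -!mulmxA !(mulKVmx uP) !(mulKmx u4).
  apply/matrixP => i j; rewrite !mxE. ring.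
have hL := hLMI (col_mx (col_mx (col_mx e (- v)) w) (- z)).
rewrite qformE /LMI1 /= in hL.
rewrite dot_block /sym3 /varphi mulmxBl dotBr in hL.
rewrite !(dot_block, mul_col_mx, dot_col, mul_row_col) in hL.
rewrite !(mul0mx, dot0r, trmx0, addr0, add0r) in hL.
set At := Atil A E Cq T1 in hL hPed *.
set Et := Etil E T1 in hL hPed *.
set G1 := Gam1 T1 in hL hz *.
set G2 := Gam2 T1 in hL hz *.
clearbody At Et G1 G2.
have h1 : dot e ((At^T *m P1 + P1 *m At + C^T *m R1^T + R1 *m C + alpha1 *: P1) *m e)
   = 2 * dot e (P1 *m (At *m e)) + 2 * dot e (R1 *m (C *m e)) + alpha1 * dot e (P1 *m e).
  have ha : dot e (At^T *m (P1 *m e)) = dot e (P1 *m (At *m e)).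
    by rewrite dot_trmx' dot_sym_mv.
  have hb : dot e (C^T *m (R1^T *m e)) = dot e (R1 *m (C *m e)).
    by rewrite dot_trmx' dotC dot_trmx'.
  rewrite !mulmxDl !dotDr -!mulmxA ha hb -scalemxAl dotZr; lra.
have h2 : dot e (- (P1 *m Et) *m - v) = dot e (P1 *m (Et *m v)).
  by rewrite mulNmx mulmxN opprK -mulmxA.
have h3 : dot (- v) ((- (P1 *m Et))^T *m e) = dot e (P1 *m (Et *m v)).
  by rewrite dot_trmx' h2.
have h4 : dot e ((P1 *m Ew + R1 *m Fw) *m w) =
    dot e (P1 *m (Ew *m w)) + dot e (R1 *m (Fw *m w)).
  by rewrite mulmxDl dotDr -!mulmxA.
have h5 : dot w ((P1 *m Ew + R1 *m Fw)^T *m e) =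
    dot e (P1 *m (Ew *m w)) + dot e (R1 *m (Fw *m w)).
  by rewrite dot_trmx' h4.
have h6 : dot w (- (mu1 *: 1%:M) *m w) = - mu1 * dot w w.
  by rewrite mulNmx -scalemxAl mul1mx dotNr dotZr mulNr.
have hvp : row_mx (row_mx 0 1%:M) 0 *m col_mx (col_mx e (- v)) w = - v.
  by rewrite !mul_row_col !mul0mx mul1mx add0r addr0.
have h7 : dot (col_mx (col_mx e (- v)) w)
      ((row_mx (row_mx 0 1%:M) 0)^T *m Y1 *m row_mx (row_mx 0 1%:M) 0 *m
       col_mx (col_mx e (- v)) w) = dot v (Y1 *m v).
  by rewrite -!mulmxA dot_trmx' hvp dotC mulmxN dotNl dotNr opprK.
have hphi : - (X1 *m G1 *m Cq + R2 *m C) *m e + X1 *m G2 *m - v +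
       - (R2 *m Fw) *m w = - (X1 *m z).
  rewrite hz !(mulmxDl, mulNmx, mulmxN, opprD) -!mulmxA.
  apply/matrixP => i j; rewrite !mxE. ring.
have h8 : dot (col_mx (col_mx e (- v)) w)
      ((row_mx (row_mx (- (X1 *m G1 *m Cq + R2 *m C)) (X1 *m G2))
          (- (R2 *m Fw)))^T *m - z) = dot z (X1 *m z).
  by rewrite dot_trmx' !mul_row_col hphi dotNl dotNr opprK.
have h9 : dot (- z) (- (X1 *m G1 *m Cq + R2 *m C) *m e + X1 *m G2 *m - v +
       - (R2 *m Fw) *m w) = dot z (X1 *m z).
  by rewrite hphi dotNl dotNr opprK.
have h10 : dot (- z) (- X1 *m - z) = - dot z (X1 *m z).
  by rewrite mulNmx mulmxN opprK dotNl.
rewrite h1 h2 h3 h4 h5 h6 h7 h8 h9 h10 in hL.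
have hd : dot ed (P1 *m e) = dot e (P1 *m ed) by rewrite -dot_sym_mv // dotC.
rewrite hd hPed !dotDr qformE.
lra.
Qed.


Lemma ctrl_ineq nx nu nw nq np (A : 'M[R]_nx) (B : 'M[R]_(nx,nu)) (E : 'M[R]_(nx,np))
  (Ew : 'M[R]_(nx,nw)) (Cq : 'M[R]_(nq,nx)) (T2 : 'M[R]_(nq+np))
  (alpha2 mu2 : R) (P2 : 'M[R]_nx) (R3 : 'M[R]_(nu,nx)) (R4 : 'M[R]_(nu,np))
  (X2 : 'M[R]_nq) (Y2 : 'M[R]_np) (K1 : 'M[R]_(nu,nx))
  (x xd e : 'cV[R]_nx) (w : 'cV[R]_nw) (pq : 'cV[R]_np) :
  P2^T = P2 -> P2 \in unitmx -> X2^T = X2 -> X2 \in unitmx -> Y2^T = Y2 -> Y2 \in unitmx ->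
  Tb4 T2 \in unitmx -> R4 = 0 -> K1 = R3 *m invmx P2 ->
  xd = A *m x + B *m (K1 *m (x - e)) + E *m pq + Ew *m w ->
  0 <= qform (T2^T *m block_mx (invmx X2) 0 0 (- invmx Y2) *m T2) (col_mx (Cq *m x) pq) ->
  negsemidef (LMI2 A B E Ew Cq T2 alpha2 mu2 P2 R3 R4 X2 Y2) ->
  dot xd (invmx P2 *m x) + dot x (invmx P2 *m xd) <=
    - alpha2 * qform (invmx P2) x + mu2 * dot w w
    - 2 * dot (invmx P2 *m x) (B *m (K1 *m e)).
Proof.
move=> sP uP sX uX sY uY u4 hR4 hK1 hxd hMM hLMI.
have sQ : (invmx P2)^T = invmx P2 by rewrite trmx_inv sP.
have sXi : (invmx X2)^T = invmx X2 by rewrite trmx_inv sX.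
have sYi : (invmx Y2)^T = invmx Y2 by rewrite trmx_inv sY.
pose xi := invmx P2 *m x.
have hPxi : P2 *m xi = x by rewrite /xi mulKVmx.
pose z := Tb1 T2 *m (Cq *m x) + Tb2 T2 *m pq.
pose v := Tb3 T2 *m (Cq *m x) + Tb4 T2 *m pq.
pose eta := invmx Y2 *m v.
have hYeta : Y2 *m eta = v by rewrite /eta mulKVmx.
have hT : T2 *m col_mx (Cq *m x) pq = col_mx z v.
  by rewrite -{1}(submxK T2) mul_block_col.
have hMM' : 0 <= dot z (invmx X2 *m z) - dot v (invmx Y2 *m v).
  move: hMM; rewrite qformE -!mulmxA dot_trmx' dotC hT dot_block.
  by rewrite !mul0mx !dot0r mulNmx dotNr !addr0.
have hdp : pq = invmx (Tb4 T2) *m (v - Tb3 T2 *m (Cq *m x)).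
  by rewrite /v addrAC subrr add0r mulKmx.
have hz0 : z = Gam1 T2 *m (Cq *m x) + Gam2 T2 *m v.
  rewrite /z {1}hdp /Gam1 /Gam2 !mulmxBr !mulmxBl !mulmxA.
  apply/matrixP => i j; rewrite !mxE. ring.
have hxd' : xd = Atil A E Cq T2 *m x + B *m (R3 *m xi) + Etil E T2 *m v + Ew *m w
   - B *m (K1 *m e).
  rewrite hxd {1}hdp /Atil /Etil /xi hK1.
  rewrite !(mulmxDr, mulmxBr, mulmxDl, mulmxBl, mulNmx, mulmxN) -!mulmxA.
  apply/matrixP => i j; rewrite !mxE. ring.
have hL := hLMI (col_mx (col_mx (col_mx xi eta) w) (invmx X2 *m z)).
rewrite qformE /LMI2 /= in hL.
rewrite dot_block /sym3 /varphi mulmxBl dotBr in hL.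
rewrite !(dot_block, mul_col_mx, dot_col, mul_row_col) in hL.
rewrite !(mul0mx, dot0r, trmx0, addr0, add0r) in hL.
rewrite hR4 mulmx0 addr0 in hL.
set At := Atil A E Cq T2 in hL hxd' *.
set Et := Etil E T2 in hL hxd' *.
set G1 := Gam1 T2 in hL hz0 *.
set G2 := Gam2 T2 in hL hz0 *.
clearbody At Et G1 G2.
have h1 : dot xi ((At *m P2 + P2 *m At^T + B *m R3 + R3^T *m B^T + alpha2 *: P2) *m xi)
  = 2 * dot xi (At *m x) + 2 * dot xi (B *m (R3 *m xi)) + alpha2 * dot xi x.
  have ha : dot xi (P2 *m (At^T *m xi)) = dot xi (At *m x).
    by rewrite -(dot_sym_mv _ _ sP) hPxi dot_trmx'.
  have hb : dot xi (R3^T *m (B^T *m xi)) = dot xi (B *m (R3 *m xi)).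
    by rewrite dot_trmx' dotC dot_trmx'.
  rewrite !mulmxDl !dotDr -!mulmxA ha hb hPxi -scalemxAl dotZr hPxi; lra.
have h2 : dot xi (Et *m Y2 *m eta) = dot xi (Et *m v) by rewrite -mulmxA hYeta.
have h3 : dot eta ((Et *m Y2)^T *m xi) = dot xi (Et *m v) by rewrite dot_trmx' h2.
have h4 : dot w (Ew^T *m xi) = dot xi (Ew *m w) by rewrite dot_trmx'.
have h5 : dot w (- (mu2 *: 1%:M) *m w) = - mu2 * dot w w.
  by rewrite mulNmx -scalemxAl mul1mx dotNr dotZr mulNr.
have hvp : row_mx (row_mx 0 1%:M) 0 *m col_mx (col_mx xi eta) w = eta.
  by rewrite !mul_row_col !mul0mx mul1mx add0r addr0.
have h6 : dot (col_mx (col_mx xi eta) w)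
      ((row_mx (row_mx 0 1%:M) 0)^T *m Y2 *m row_mx (row_mx 0 1%:M) 0 *m
       col_mx (col_mx xi eta) w) = dot v (invmx Y2 *m v).
  by rewrite -!mulmxA dot_trmx' hvp hYeta.
have h7 : G1 *m Cq *m P2 *m xi + G2 *m Y2 *m eta = z.
  by rewrite -!mulmxA hPxi hYeta hz0.
have h8 : dot (col_mx (col_mx xi eta) w)
      ((row_mx (row_mx (G1 *m Cq *m P2) (G2 *m Y2)) 0)^T *m (invmx X2 *m z))
   = dot z (invmx X2 *m z).
  by rewrite dot_trmx' !mul_row_col mul0mx addr0 h7 dotC.
have h9 : dot (invmx X2 *m z) (G1 *m Cq *m P2 *m xi + G2 *m Y2 *m eta)
   = dot z (invmx X2 *m z) by rewrite h7 dotC.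
have h10 : dot (invmx X2 *m z) (- X2 *m (invmx X2 *m z)) = - dot z (invmx X2 *m z).
  by rewrite mulNmx mulKVmx // dotNr dotC.
rewrite h1 h2 h3 h4 h5 h6 h8 h9 h10 in hL.
have hd1 : dot x (invmx P2 *m xd) = dot xi xd by rewrite -(dot_sym_mv _ _ sQ).
have hd2 : dot xd (invmx P2 *m x) = dot xi xd by rewrite dotC.
rewrite hd1 hd2 qformE -/xi.
have hq : dot x xi = dot xi x by rewrite dotC.
rewrite hq hxd' !(dotDr, dotBr, dotNr).
lra.
Qed.

End Aux3.


Section Aux4.
Set Implicit Arguments. Unset Strict Implicit. Unset Printing Implicit Defensive.
Variable R : realType.

Lemma posdef_ge0 n (P : 'M[R]_n) : posdef P -> forall v, 0 <= qform P v.
Proof.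
move=> [_ hP] v; have [->|vn0] := eqVneq v 0; first by rewrite qform0.
exact/ltW/hP.
Qed.

Lemma posdef_unit n (P : 'M[R]_n) : posdef P -> P \in unitmx.
Proof.
move=> [sP hP]; rewrite unitmxE unitfE; apply/negP => /det0P [v vn0 vP].
have : 0 < qform P v^T by apply: hP; rewrite -(inj_eq (@trmx_inj _ _ _)) trmxK trmx0.
rewrite qformE -{1}sP -trmx_mul vP trmx0 dot0r ltxx //.
Qed.

Lemma posdef_inv n (P : 'M[R]_n) : posdef P -> posdef (invmx P).
Proof.
move=> hP; have uP := posdef_unit hP; case: hP => [sP hP].
split; first by rewrite trmx_inv sP.
move=> x xn0; rewrite qformE.
have hx : P *m (invmx P *m x) = x by rewrite mulKVmx.
rewrite -{1}hx (dot_sym_mv _ _ sP) -qformE; apply: hP.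
by apply: contraNneq xn0 => h; rewrite -(mulKVmx uP x) h mulmx0.
Qed.

Lemma young n (P : 'M[R]_n) (xi g : 'cV[R]_n) (r : R) : posdef P -> 0 < r ->
  - 2 * dot xi g <= r * qform P xi + r^-1 * qform (invmx P) g.
Proof.
move=> hP r0; have uP := posdef_unit hP; have h0 := posdef_ge0 hP.
have sP := hP.1.
have := h0 (r *: xi + invmx P *m g).
rewrite qformE !mulmxDr !dotDl !dotDr mulKVmx // -!scalemxAr !dotZl !dotZr.
have -> : dot (invmx P *m g) (P *m xi) = dot xi g.
  by rewrite -(dot_sym_mv _ _ sP) mulKVmx // dotC.
rewrite -!qformE.
have -> : dot (invmx P *m g) g = qform (invmx P) g by rewrite qformE dotC.
move=> h.
have hq : 0 <= qform (invmx P) g by apply: posdef_ge0; exact: posdef_inv.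
have : 0 <= r^-1 * (r * (r * qform P xi) + r * dot xi g + (r * dot xi g + qform (invmx P) g)).
  by rewrite mulr_ge0 // invr_ge0 ltW.
have e : r^-1 * (r * (r * qform P xi) + r * dot xi g + (r * dot xi g + qform (invmx P) g))
  = r * qform P xi + 2 * dot xi g + r^-1 * qform (invmx P) g.
  by field; rewrite gt_eqF.
rewrite e; lra.
Qed.

Lemma qform_mul n m (Q : 'M[R]_n) (M : 'M[R]_(n,m)) e :
  qform Q (M *m e) = qform (M^T *m Q *m M) e.
Proof. by rewrite !qformE -!mulmxA [RHS]dot_trmx trmxK. Qed.

Lemma qform_scalemx n (P : 'M[R]_n) k v : qform (k *: P) v = k * qform P v.
Proof. by rewrite !qformE -scalemxAl dotZr. Qed.

Lemma qform_continuous n (M : 'M[R]_n) : continuous (fun v : 'cV[R]_n => qform M v).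
Proof.
have -> : (fun v : 'cV[R]_n => qform M v) =
   \sum_(i < n) \sum_(j < n) ((cst (M i j)) * ((fun v : 'cV[R]_n => v i 0) * (fun v => v j 0))).
  apply: funext => r; rewrite qform_sum fct_sumE; apply: eq_bigr => i _.
  by rewrite fct_sumE.
move=> r; apply: differentiable_continuous.
apply: differentiable_sum => i; apply: differentiable_sum => j.
apply: differentiableM; first exact: differentiable_cst.
by apply: differentiableM; exact: differentiable_coord.
Qed.

Lemma qform_block n1 n2 (Q : 'M[R]_n1) (P : 'M[R]_n2) a b :
  qform (block_mx Q 0 0 P) (col_mx a b) = qform Q a + qform P b.
Proof. by rewrite !qformE dot_block !mul0mx !dot0r addr0 addr0. Qed.

Lemma posdef_block n1 n2 (Q : 'M[R]_n1) (P : 'M[R]_n2) :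
  posdef Q -> posdef P -> posdef (block_mx Q 0 0 P).
Proof.
move=> hQ hP; split; first by rewrite tr_block_mx hQ.1 hP.1 !trmx0.
move=> v; rewrite -(vsubmxK v); move: (usubmx v) (dsubmx v) => a b.
rewrite qform_block col_mx_eq0 negb_and => /orP [h|h].
  have := hQ.2 _ h; have := posdef_ge0 hP b; lra.
have := hP.2 _ h; have := posdef_ge0 hQ a; lra.
Qed.

Lemma expR_cvg0 (a : R) : 0 < a -> expR (- (a * t)) @[t --> +oo] --> 0.
Proof.
move=> a0.
have h : (a * t) @[t --> +oo] --> +oo.
  by apply: gt0_cvgMry => //; exact: cvg_id.
have h2 := @cvgr_expR R. exact: (cvg_comp _ _ h h2).
Qed.

End Aux4.


Lemma posdef_scale {R : realType} {n} {P : 'M[R]_n} {k : R} : 0 < k -> posdef P -> posdef (k *: P).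
Proof.
move=> k0 [sP hP]; split; first by rewrite linearZ /= sP.
by move=> v vn0; rewrite qform_scalemx mulr_gt0 // hP.
Qed.

Lemma lin_continuous {R : realType} (a : R) : continuous (fun s : R => a * s).
Proof.
move=> x; apply: differentiable_continuous; apply/derivable1_diffP.
by case: (is_derive_lin a x).
Qed.

Theorem corollary2 (R : realType) (nx nu ny nw nq np : nat)
  (A : 'M[R]_nx) (B : 'M[R]_(nx, nu)) (E : 'M[R]_(nx, np)) (Ew : 'M[R]_(nx, nw))
  (C : 'M[R]_(ny, nx)) (D : 'M[R]_(ny, nu)) (Fw : 'M[R]_(ny, nw)) (Cq : 'M[R]_(nq, nx))
  (p : 'cV[R]_nq -> 'cV[R]_np) (Hp0 : p 0 = 0)
  (* condition (i) *)
  (N1 : set ('M[R]_nq * 'M[R]_np)) (T1 : 'M[R]_(nq + np))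
  (HT1 : T1 \in unitmx) (HT14 : Tb4 T1 \in unitmx)
  (HN1sym : forall XY, N1 XY -> XY.1^T = XY.1 /\ XY.2^T = XY.2)
  (HN1 : forall XY, N1 XY -> delta_MM p (T1^T *m block_mx XY.1 0 0 (- XY.2) *m T1))
  (* condition (ii) *)
  (N2 : set ('M[R]_nq * 'M[R]_np)) (T2 : 'M[R]_(nq + np))
  (HT2 : T2 \in unitmx) (HT24 : Tb4 T2 \in unitmx)
  (HN2sym : forall XY, N2 XY -> XY.1^T = XY.1 /\ XY.2^T = XY.2 /\
                                XY.1 \in unitmx /\ XY.2 \in unitmx)
  (HN2 : forall XY, N2 XY ->
     delta_MM p (T2^T *m block_mx (invmx XY.1) 0 0 (- invmx XY.2) *m T2))
  (* condition (iii) *)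
  (alpha1 alpha2 mu1 mu2 : R)
  (R1 : 'M[R]_(nx, ny)) (R2 : 'M[R]_(nq, ny)) (R3 : 'M[R]_(nu, nx)) (R4 : 'M[R]_(nu, np))
  (P1 P2 : 'M[R]_nx) (X1 X2 : 'M[R]_nq) (Y1 Y2 : 'M[R]_np)
  (Ha1 : 0 < alpha1) (Ha2 : 0 < alpha2) (Hm1 : 0 < mu1) (Hm2 : 0 < mu2)
  (HP1 : posdef P1) (HP2 : posdef P2) (HX1 : posdef X1) (HY1 : Y1^T = Y1)
  (HX2 : posdef X2) (HY2 : posdef Y2)
  (HXY1 : N1 (X1, Y1)) (HXY2 : N2 (X2, Y2))
  (HR4 : R4 = 0)
  (HLMI1 : negsemidef (LMI1 A C E Ew Fw Cq T1 alpha1 mu1 P1 R1 R2 X1 Y1))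
  (HLMI2 : negsemidef (LMI2 A B E Ew Cq T2 alpha2 mu2 P2 R3 R4 X2 Y2))
  (* gains *)
  (L1 : 'M[R]_(nq, ny)) (L2 : 'M[R]_(nx, ny)) (K1 : 'M[R]_(nu, nx))
  (HL1 : L1 = invmx (Gam1 T1) *m invmx X1 *m R2)
  (HL2 : L2 = invmx P1 *m R1 + E *m invmx (Tb4 T1) *m Tb3 T1 *m L1)
  (HK1 : K1 = R3 *m invmx P2) :
  closed_loop_ISS A B E Ew C D Fw Cq p L1 L2 K1.
Proof.
have sP1 := HP1.1. have uP1 := posdef_unit HP1.
have sP2 := HP2.1. have uP2 := posdef_unit HP2.
have uX1 := posdef_unit HX1. have uX2 := posdef_unit HX2. have sX2 := HX2.1.
have sY2 := HY2.1. have uY2 := posdef_unit HY2.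
have uG1 : Gam1 T1 \in unitmx := schur_unit HT1 HT14.
have HQ : posdef (invmx P2) := posdef_inv HP2.
pose G := (B *m K1)^T *m invmx P2 *m (B *m K1).
have [kG kG0 hkG] := qform_rel G HP1.
have [Cw Cw0 hCw] := qform_ub (1%:M : 'M[R]_nw).
pose kap := 1 + 4 * kG / (alpha1 * alpha2).
have kq : 0 <= 4 * kG / (alpha1 * alpha2).
  by apply: divr_ge0; [apply: mulr_ge0 | apply/ltW/mulr_gt0].
have kap0 : 0 < kap by rewrite /kap; lra.
have kapb : 2 / alpha2 * kG <= kap * alpha1 / 2.
  rewrite /kap.
  have -> : (1 + 4 * kG / (alpha1 * alpha2)) * alpha1 / 2 = alpha1 / 2 + 2 / alpha2 * kG.
    by field; rewrite !gt_eqF.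
  have : 0 < alpha1 / 2 by apply: divr_gt0.
  lra.
pose c := Num.min (alpha2 / 2) (alpha1 / 2).
have c0 : 0 < c by rewrite /c lt_min !divr_gt0.
have c1 : c <= alpha2 / 2 by rewrite /c ge_min lexx.
have c2 : c <= alpha1 / 2 by rewrite /c ge_min lexx orbT.
pose Blk := block_mx (invmx P2) 0 0 (kap *: P1).
have HBlk : posdef Blk := posdef_block HQ (posdef_scale kap0 HP1).
have [mB mB0 hmB] := posdef_lb HBlk.
have [CB CB0 hCB] := qform_ub Blk.
pose bw := (mu2 + kap * mu1) * Cw.
have bw0 : 0 <= bw by rewrite mulr_ge0 // addr_ge0 ?mulr_ge0 // ltW.
pose k1 := CB / mB + 1.
pose k2 := bw / (c * mB) + 1.
have qq1 : 0 <= CB / mB by apply: divr_ge0 => //; exact: ltW.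
have q2 : 0 <= bw / (c * mB) by apply: divr_ge0 => //; apply/ltW/mulr_gt0.
have k10 : 0 < k1 by rewrite /k1; lra.
have k20 : 0 < k2 by rewrite /k2; lra.
exists (fun s t => k1 * s * expR (- ((c / 2) * t))), (fun r => k2 * r).
have c20 : 0 < c / 2 by apply: divr_gt0.
split; [|split].
- split.
  + move=> t t0; split; first by rewrite mulr0 mul0r.
    split.
    * apply: continuous_subspaceT => s.
      apply: cvgMr_tmp; exact: lin_continuous.
    * move=> a b a0 ab; rewrite ltr_pM2r ?expR_gt0 // ltr_pM2l //.
  + move=> s s0; split.
    * move=> t1 t2 t10 t12; apply: ler_wpM2l; first by rewrite mulr_ge0 // ltW.
      rewrite ler_expR.
      by rewrite lerN2 ler_wpM2l // ltW.
    * rewrite -(mulr0 (k1 * s)); apply: cvgMl_tmp; exact: expR_cvg0.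
- split; first by rewrite mulr0.
  split; first by apply: continuous_subspaceT; exact: lin_continuous.
  by move=> a b a0 ab; rewrite ltr_pM2l.
- move=> w x xh [Mw hMw] [cx [cxh hsol]] t t0.
  pose W := sup_norm w.
  have hS : has_sup [set `|w t| | t in `[0, +oo[%classic].
    split; first by exists `|w 0|, 0 => //; rewrite /= in_itv /= lexx.
    by exists Mw => _ [s hs <-]; apply: hMw; move: hs; rewrite /= in_itv /= andbT.
  have hW : forall s, 0 <= s -> `|w s| <= W.
    by move=> s s0; apply: sup_upper_bound => //; exists s => //; rewrite /= in_itv /= s0.
  have W0 : 0 <= W by apply: le_trans (hW 0 (lexx 0)).
  pose U := fun s => qform (invmx P2) (x s) + qform (kap *: P1) (x s - xh s).
  have hUB : forall s, U s = qform Blk (col_mx (x s) (x s - xh s)).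
    by move=> s; rewrite qform_block.
  have cU : {within `[0, +oo[, continuous U}.
    move=> s; apply: cvgD.
    - exact: (continuous_comp (cx s) (@qform_continuous _ _ (invmx P2) (x s))).
    - have h1 : {for s, continuous ((fun s => x s - xh s) :
          subspace `[0, +oo[%classic -> 'cV[R]_nx)}.
        exact: cvgB (cx s) (cxh s).
      exact: (continuous_comp h1 (@qform_continuous _ _ (kap *: P1) (x s - xh s))).
  have dU : forall s : R, 0 < s ->
      exists2 dU : R, is_derive s 1 U dU & dU <= - c * U s + bw * W ^+ 2.
    move=> s s0.
    have := hsol s s0; move=> /= [hx hxh].
    set yy := C *m xh s + D *m (K1 *m xh s) - (C *m x s + D *m (K1 *m xh s) + Fw *m w s) in hxh.
    set qobs := Cq *m xh s + L1 *m yy in hxh.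
    set dx := A *m x s + B *m (K1 *m xh s) + E *m p (Cq *m x s) + Ew *m w s in hx.
    set dxh := A *m xh s + B *m (K1 *m xh s) + E *m p qobs + L2 *m yy in hxh.
    have hd := is_deriveD (is_derive_qform (invmx P2) hx)
       (is_derive_qform (kap *: P1) (is_deriveB hx hxh)).
    eexists; first exact: hd.
    have ee : (x - xh) s = x s - xh s by [].
    rewrite ee -!scalemxAl !dotZr.
    set e := x s - xh s.
    have hyy : yy = - (C *m e + Fw *m w s).
      rewrite /yy /e !(mulmxBr, mulmxDr, opprD, opprB).
      apply/matrixP => i j; rewrite !mxE. ring.
    have hdq : Cq *m x s - qobs = Cq *m e + L1 *m (C *m e + Fw *m w s).
      rewrite /qobs hyy /e !(mulmxBr, mulmxDr, mulmxN, opprD, opprB).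
      apply/matrixP => i j; rewrite !mxE. ring.
    have hed : dx - dxh = A *m e + E *m (p (Cq *m x s) - p qobs) + Ew *m w s
        + L2 *m (C *m e + Fw *m w s).
      rewrite /dx /dxh hyy /e !(mulmxBr, mulmxDr, mulmxN, opprD, opprB).
      apply/matrixP => i j; rewrite !mxE. ring.
    have hMM1 := (HN1 _ HXY1).2 qobs (Cq *m x s).
    rewrite /= in hMM1.
    have obs := obs_ineq sP1 uP1 uX1 HT14 uG1 HL1 HL2 hdq hed hMM1 HLMI1.
    have hxd : dx = A *m x s + B *m (K1 *m (x s - e)) + E *m p (Cq *m x s) + Ew *m w s.
      have -> : x s - e = xh s by rewrite /e opprB addrCA subrr addr0.
      by [].
    have hMM2 := (HN2 _ HXY2).2 0 (Cq *m x s).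
    rewrite /= !subr0 Hp0 subr0 in hMM2.
    have ctrl := ctrl_ineq sP2 uP2 sX2 uX2 sY2 uY2 HT24 HR4 HK1 hxd hMM2 HLMI2.
    have a2 : 0 < alpha2 / 2 by apply: divr_gt0.
    have yg := young (invmx P2 *m x s) (B *m (K1 *m e)) HP2 a2.
    have hqq : qform P2 (invmx P2 *m x s) = qform (invmx P2) (x s).
      by rewrite !qformE mulKVmx // dotC.
    have hqG : qform (invmx P2) (B *m (K1 *m e)) = qform G e by rewrite mulmxA qform_mul.
    rewrite hqq hqG in yg.
    have hg := hkG e.
    have hww : dot (w s) (w s) <= Cw * W ^+ 2.
      have := hCw (w s); rewrite qformE mul1mx => h; apply: le_trans h _.
      apply: ler_wpM2l => //; rewrite !expr2; apply: ler_pM => //; exact: hW (ltW s0).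
    have a0 := posdef_ge0 HQ (x s).
    have b0 := posdef_ge0 HP1 e.
    have hU : U s = qform (invmx P2) (x s) + kap * qform P1 e by rewrite /U qform_scalemx.
    rewrite hU -mulrDr.
    set a := qform (invmx P2) (x s) in yg ctrl a0 *.
    set b := qform P1 e in obs hg b0 *.
    set ww := dot (w s) (w s) in obs ctrl hww *.
    set o := dot (dx - dxh) (P1 *m e) + dot e (P1 *m (dx - dxh)) in obs *.
    have p1 : kap * o <= kap * (- alpha1 * b + mu1 * ww) by rewrite ler_wpM2l // ltW.
    have ia : (alpha2 / 2)^-1 = 2 / alpha2 by rewrite invf_div.
    rewrite ia in yg.
    have p2 : 2 / alpha2 * qform G e <= 2 / alpha2 * (kG * b).
      by rewrite ler_wpM2l // divr_ge0 // ltW.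
    have p3 : 2 / alpha2 * kG * b <= kap * alpha1 / 2 * b by rewrite ler_wpM2r.
    have p4 : c * a <= alpha2 / 2 * a by rewrite ler_wpM2r.
    have p5 : c * (kap * b) <= alpha1 / 2 * (kap * b).
      by rewrite ler_wpM2r // mulr_ge0 // ltW.
    have p6 : kap * mu1 * ww <= kap * mu1 * (Cw * W ^+ 2).
      by rewrite ler_wpM2l // mulr_ge0 // ltW.
    have p7 : mu2 * ww <= mu2 * (Cw * W ^+ 2) by rewrite ler_wpM2l // ltW.
    rewrite /bw.
    lra.
  have bW0 : 0 <= bw * W ^+ 2 by rewrite mulr_ge0 // exprn_ge0.
  have hc := comparison c0 bW0 cU dU t0.
  have hlow := hmB (col_mx (x t) (x t - xh t)); rewrite -hUB in hlow.
  have hup := hCB (col_mx (x 0) (x 0 - xh 0)); rewrite -hUB in hup.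
  rewrite /= -/W.
  set N := `|col_mx (x t) (x t - xh t)| in hlow *.
  set N0 := `|col_mx (x 0) (x 0 - xh 0)| in hup *.
  set Ex := expR (- (c * t)) in hc.
  set Eh := expR (- (c / 2 * t)).
  have hE : Ex = Eh ^+ 2.
    by rewrite /Ex /Eh expr2 -expRD; congr expR; field.
  have Eh0 : 0 < Eh by apply: expR_gt0.
  have N0p : 0 <= N0 by apply: normr_ge0.
  have Np : 0 <= N by apply: normr_ge0.
  have h1 : mB * N ^+ 2 <= Ex * (CB * N0 ^+ 2) + bw * W ^+ 2 / c.
    apply: le_trans hlow _; apply: le_trans hc _; rewrite lerD2r.
    by rewrite ler_wpM2l // hE exprn_ge0 // ltW.
  have h2 : N ^+ 2 <= CB / mB * (Ex * N0 ^+ 2) + bw / (c * mB) * W ^+ 2.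
    have e1 : CB / mB * (Ex * N0 ^+ 2) + bw / (c * mB) * W ^+ 2 =
       mB^-1 * (Ex * (CB * N0 ^+ 2) + bw * W ^+ 2 / c).
      by field; rewrite !gt_eqF.
    by rewrite e1 -(ler_pM2l mB0) mulVKf ?gt_eqF.
  have h3 : CB / mB <= k1 ^+ 2 by rewrite /k1 expr2; nra.
  have h4 : bw / (c * mB) <= k2 ^+ 2 by rewrite /k2 expr2; nra.
  have h5 : CB / mB * (Ex * N0 ^+ 2) <= k1 ^+ 2 * (Ex * N0 ^+ 2).
    by rewrite ler_wpM2r // mulr_ge0 // ?exprn_ge0 // hE exprn_ge0 // ltW.
  have h6 : bw / (c * mB) * W ^+ 2 <= k2 ^+ 2 * W ^+ 2.
    by rewrite ler_wpM2r // exprn_ge0.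
  have h7 : N ^+ 2 <= (k1 * N0 * Eh + k2 * W) ^+ 2.
    apply: le_trans h2 _; apply: le_trans (lerD h5 h6) _.
    rewrite hE.
    have : 0 <= k1 * N0 * Eh * (k2 * W) by rewrite !mulr_ge0 // ltW.
    rewrite !expr2; nra.
  have hS0 : 0 <= k1 * N0 * Eh + k2 * W by rewrite addr_ge0 // !mulr_ge0 // ltW.
  by rewrite -ler_sqr // nnegrE.
Qed.
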